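(* Let $M=(m_0,m_1,m_2,\ldots)$ be a (possibly finite) sequence of integers with $m_0=1$ and $m_j\ge 2$ for all $j\ge 1$. Assume that for every index $t\ge1$ and every prime $p$, if $p\mid m_t$ then $p\ge t$. Then for all positive integers $n$ and $r$ (with $r$ at most the largest index of $M$ if $M$ is finite) we have $$p_M(m_1m_2\cdots m_r\,n-1)\equiv 0 \pmod{\prod_{t=2}^{r} m_t}.$$
   Context: For $r\ge 0$ put $M_r:=m_0m_1\cdots m_r$. An $M$-ary partition of a positive integer $N$ is a partition of $N$ (order of parts disregarded) all of whose parts are of the form $M_r$ for some $r\ge 0$. $p_M(N)$ denotes the number of $M$-ary partitions of $N$. An empty product equals $1$. *)

(* Defs.v *)
From mathcomp Require Import all_boot.
Set Implicit Arguments. Unset Strict Implicit. Unset Printing Implicit Defensive.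

(* The sequence M = (m_0, m_1, ...) is given by m : nat -> nat together with
   K : option nat; K = Some k means M is finite with largest index k,
   K = None means M is infinite.  Values m j for j beyond k are irrelevant. *)
Definition in_range (K : option nat) (j : nat) : bool :=
  if K is Some k then j <= k else true.

Definition Mprod (m : nat -> nat) (r : nat) : nat := \prod_(i < r.+1) m i.

(* k is an admissible part: k = M_r for some index r of M.
   (Under the standing hypotheses M_r > r for r >= 1 and M_0 = 1, so
   r < k.+1 is no restriction.) *)
Definition is_Mpart (m : nat -> nat) (K : option nat) (k : nat) : bool :=
  [exists r : 'I_k.+1, in_range K r && (Mprod m r == k)].

(* A partition of N is encoded by its multiplicity function c, where c k is
   the number of parts equal to k (parts are between 1 and N, multiplicities
   at most N). *)
Definition pM (m : nat -> nat) (K : option nat) (N : nat) : nat :=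
  #|[set c : {ffun 'I_N.+1 -> 'I_N.+1} |
      [forall k, (c k != 0 :> nat) ==> is_Mpart m K k]
      && (\sum_(k < N.+1) k * c k == N)]|.

(* Main.v *)
Require Import Defs.
From mathcomp Require Import all_boot all_algebra ring zify.
Set Implicit Arguments. Unset Strict Implicit. Unset Printing Implicit Defensive.
Import GRing.Theory Num.Theory.


Definition Dif (f : nat -> int) : nat -> int := fun x => (f x.+1 - f x)%R.

Fixpoint Dl (k : nat) (f : nat -> int) : Prop :=
  match k with 0 => forall x, f x = 0%R | k'.+1 => Dl k' (Dif f) end.

Lemma Dl_ext k f g : (forall x, f x = g x) -> Dl k f -> Dl k g.
Proof.
elim: k f g => [|k IH] f g E /=; first by move=> H x; rewrite -E.
apply: IH => x; by rewrite /Dif !E.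
Qed.

Lemma Dl_zero k : Dl k (fun _ => 0%R).
Proof.
elim: k => [//|k IH] /=; apply: Dl_ext IH => x; by rewrite /Dif subrr.
Qed.

Lemma Dl_add k f g : Dl k f -> Dl k g -> Dl k (fun x => f x + g x)%R.
Proof.
elim: k f g => [|k IH] f g /=; first by move=> Hf Hg x; rewrite Hf Hg addr0.
move=> Hf Hg; have := IH _ _ Hf Hg; apply: Dl_ext => x.
rewrite /Dif; ring.
Qed.

Lemma Dl_sum k n (F : nat -> nat -> int) :
  (forall u, (u < n)%N -> Dl k (F u)) -> Dl k (fun x => \sum_(u < n) F u x)%R.
Proof.
elim: n => [|n IH] H.
  apply: Dl_ext (Dl_zero k) => x; by rewrite big_ord0.
have := Dl_add (IH (fun u hu => H u (ltnW hu))) (H n (ltnSn n)).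
apply: Dl_ext => x; by rewrite big_ord_recr.
Qed.

Lemma Dl_scale_inv k (c : int) f : c != 0%R -> Dl k (fun x => c * f x)%R -> Dl k f.
Proof.
move=> hc; elim: k f => [|k IH] f /=.
  by move=> H x; move: (H x) => /eqP; rewrite mulf_eq0 (negbTE hc) /= => /eqP.
move=> H; apply: IH; apply: Dl_ext H => x; rewrite /Dif; ring.
Qed.

Lemma Dl_affine k f (m b : nat) : Dl k f -> Dl k (fun x => f (m * x + b)%N).
Proof.
elim: k f b => [|k IH] f b /=; first by move=> H x; rewrite H.
move=> H.
have := Dl_sum (n := m) (F := fun u x => Dif f (m * x + (b + u))%N) (fun u _ => IH _ _ H).
apply: Dl_ext => x; rewrite /Dif.
have := telescope_sumr (fun k => f (m * x + b + k)%N) (leq0n m).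
rewrite big_mkord => E.
have E2 : (m * x.+1 + b = m * x + b + m)%N by rewrite mulnS; lia.
rewrite E2; have -> : f (m * x + b)%N = f (m * x + b + 0)%N by rewrite addn0.
rewrite -E; apply: eq_bigr => i _.
by rewrite !addnA addnS.
Qed.

Lemma Dl_mono k f : Dl k f -> Dl k.+1 f.
Proof.
elim: k f => [|k IH] f /=; last by apply: IH.
by move=> H x; rewrite /Dif !H subrr.
Qed.

Lemma Dl_monoL k j f : (k <= j)%N -> Dl k f -> Dl j f.
Proof.
move=> /subnK <-; elim: (j - k)%N => [//|d IH] H; rewrite addSn; exact: Dl_mono (IH H).
Qed.

Lemma Dl_iter k f : Dl k f -> forall x, iter k Dif f x = 0%R.
Proof.
elim: k f => [|k IH] f H x //.
by rewrite iterSr (IH (Dif f) H).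
Qed.

Lemma newton f x : f x = (\sum_(j < x.+1) ('C(x, j))%:R * iter j Dif f 0%N)%R.
Proof.
elim: x f => [|x IH] f; first by rewrite big_ord1 bin0 mul1r.
have -> : f x.+1 = (f x + Dif f x)%R by rewrite /Dif; ring.
rewrite (IH f) (IH (Dif f)).
rewrite big_ord_recl bin0 mul1r [in RHS]big_ord_recl bin0 mul1r /=.
under [in RHS]eq_bigr => i _ do rewrite binS natrD mulrDl.
rewrite big_split /= -addrA; congr (_ + _)%R.
rewrite [X in _ = (X + _)%R]big_ord_recr /= bin_small // mul0r addr0.
rewrite /bump /=; congr (_ + _)%R; apply: eq_bigr => i _; by rewrite -iterSr iterS.
Qed.

Lemma sum_extend (a : nat -> int) n n' : (n <= n')%N -> (forall j, (n <= j)%N -> a j = 0%R) ->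
  (\sum_(j < n) a j = \sum_(j < n') a j)%R.
Proof.
move=> le H; rewrite -!(big_mkord xpredT) (big_cat_nat (leq0n n) le) /=.
rewrite [X in _ = (_ + X)%R]big1_seq ?addr0 // => j /andP[_]; rewrite mem_index_iota => /andP[hj _].
exact: H.
Qed.

Lemma newton_trunc t f y : Dl t f ->
  f y = (\sum_(j < t) ('C(y, j))%:R * iter j Dif f 0%N)%R.
Proof.
move=> H; rewrite newton.
pose a := fun j => (('C(y, j))%:R * iter j Dif f 0%N)%R.
rewrite (@sum_extend a _ (y.+1 + t)%N) ?leq_addr //; last first.
  by move=> j hj; rewrite /a bin_small // mul0r.
rewrite [RHS](@sum_extend a _ (y.+1 + t)%N) ?leq_addl //.
move=> j hj; rewrite /a (Dl_iter (Dl_monoL hj H)) mulr0 //.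
Qed.

Lemma hockey N j : (0 < j)%N -> (\sum_(x < N) 'C(x.+1, j) = 'C(N.+1, j.+1))%N.
Proof.
move=> hj; elim: N => [|N IH]; first by rewrite big_ord0 bin_small.
by rewrite big_ord_recr /= IH [in RHS]binS addnC.
Qed.

Lemma dvd_bin m w j : (0 < j)%N -> coprime m (j * j.+1) -> (m %| 'C((m * w).+1, j.+1))%N.
Proof.
move=> hj cop.
rewrite -(Gauss_dvdr _ cop).
have E1 := mul_bin_diag (m * w).+1 j.
have E2 := mul_bin_diag (m * w) j.-1.
rewrite prednK // in E2.
rewrite /= in E1.
rewrite -mulnA -E1 mulnCA -E2.
by apply: dvdn_mull; apply: dvdn_mulr; apply: dvdn_mulr.
Qed.

Lemma sum_div t f m w : Dl t f -> f 0%N = 0%R ->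
  (forall j, (0 < j < t)%N -> coprime m (j * j.+1)) ->
  ((m%:Z) %| (\sum_(x < m * w) f x.+1)%R)%Z.
Proof.
move=> H f0 cop.
under eq_bigr => x _ do rewrite (newton_trunc x.+1 H).
rewrite exchange_big /=.
apply: rpred_sum => j _.
case: (posnP j) => [j0|jpos].
  by apply: rpred_sum => x _; rewrite j0 /= f0 mulr0.
under eq_bigr => x _ do rewrite mulrC.
rewrite -mulr_sumr; apply: dvdz_mull.
rewrite -natr_sum natz hockey //.
rewrite dvdzE /=.
by apply: dvd_bin => //; apply: cop; rewrite jpos ltn_ord.
Qed.

Fixpoint gg (m : nat -> nat) (t : nat) : nat -> nat :=
  match t with
  | 0 => fun x => (x == 1%N) : nat
  | t'.+1 => fun w => (\sum_(x < m t'.+1 * w) gg m t' x.+1)%N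
  end.

Definition Pprod (m : nat -> nat) t := (\prod_(2 <= i < t.+1) m i)%N.

Lemma sum_ord_add (F : nat -> int) a b :
  (\sum_(x < a + b) F x = \sum_(x < a) F x + \sum_(u < b) F (a + u)%N)%R.
Proof. by rewrite big_split_ord. Qed.

Lemma gg1 m x : (0 < m 1%N)%N -> (\sum_(x0 < m 1%N * x.+1) ((x0.+1 == 1%N) : nat))%N = 1%N.
Proof.
move=> hm /=; rewrite -(prednK (_ : 0 < m 1%N * x.+1)%N) ?muln_gt0 ?hm //.
by rewrite big_ord_recl /= big1 // => i _.
Qed.

Lemma gg_div m T :
  (forall s, (1 <= s <= T)%N -> (0 < m s)%N) ->
  (forall s j, (1 <= s <= T)%N -> (0 < j)%N -> (j.+1 < s)%N -> coprime (m s) (j * j.+1)) ->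
  forall t, (2 <= t <= T)%N ->
  exists h : nat -> int, [/\ Dl t h, h 0%N = 0%R &
     forall w, (Posz (gg m t w) = Posz (Pprod m t) * h w)%R].
Proof.
move=> mpos cop; elim=> [|t IH] //.
move=> /andP [h2 htT].
case: (t =P 1%N) => [e1 | ne1].
  subst t.
  exists (fun w => Posz w); split => //.
    move=> x; rewrite /Dif /=; lia.
  move=> w; rewrite /Pprod big_nat1 /= -PoszM; congr Posz.
  have m1 : (0 < m 1%N)%N by apply: mpos; rewrite /=; apply: ltnW.
  under eq_bigr => x _ do rewrite gg1 //.
  by rewrite sum1_card card_ord.
have [|h [Dh h0 gh]] := IH.
  apply/andP; split; [lia | exact: ltnW].
set M := m t.+1.
have mp : (0 < M)%N by apply: mpos; rewrite htT.
pose S := fun w => (\sum_(x < M * w) h x.+1)%R.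
have dS : forall w, (Posz M %| S w)%Z.
  move=> w; rewrite /S. apply: (@sum_div t h M w Dh h0) => j /andP[j0 jt].
  by apply: cop => //; rewrite htT.
pose h' := fun w => (S w %/ Posz M)%Z.
have Eh : forall w, (h' w * Posz M = S w)%R by move=> w; apply: divzK.
have Mn0 : (Posz M != 0)%R by rewrite eqz_nat -lt0n.
exists h'; split.
- apply: (Dl_scale_inv Mn0) => /=.
  have := Dl_sum (n := M) (F := fun u x => h (M * x + u.+1)%N) (fun u _ => Dl_affine M u.+1 Dh).
  apply: Dl_ext => x; rewrite /Dif -mulrBr ![(Posz M * _)%R]mulrC mulrBl !Eh /S.
  rewrite mulnSr (sum_ord_add (fun x => h x.+1)) [X in _ = X]addrC addKr; apply: eq_bigr => i _; by rewrite addnS.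
- by rewrite /h' /S muln0 big_ord0 div0z.
move=> w.
have -> : gg m t.+1 w = (\sum_(x < M * w) gg m t x.+1)%N by [].
rewrite -natz natr_sum.
under eq_bigr => x _ do rewrite natz gh.
rewrite -mulr_sumr -/(S w) -Eh /Pprod [in RHS]big_nat_recr //= PoszM.
rewrite -/M; ring.
Qed.


Lemma sumn_ord_add (F : nat -> nat) a b :
  \sum_(x < a + b) F x = \sum_(x < a) F x + \sum_(u < b) F (a + u).
Proof. by rewrite big_split_ord. Qed.

Lemma sum_mult m L (G : nat -> nat) : 0 < m ->
  \sum_(y < m * L) (m %| y) * G y = \sum_(y < L) G (m * y).
Proof.
move=> mp; elim: L => [|L IH]; first by rewrite muln0 !big_ord0.
rewrite mulnSr (sumn_ord_add (fun y => (m %| y) * G y)) IH big_ord_recr /=; congr (_ + _).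
rewrite -(prednK mp) big_ord_recl /= addn0 dvdn_mulr // mul1n prednK //.
rewrite big1 ?addn0 // => i _.
rewrite /bump /= add1n.
have -> : m %| m * L + i.+1 = false.
  apply/negP; rewrite dvdn_addr ?dvdn_mulr //; move=> /dvdn_leq; rewrite ltnS => /(_ isT).
  by have := ltn_ord i; lia.
by rewrite mul0n.
Qed.

Lemma sum_tail N y (g : nat -> nat) : y <= N ->
  \sum_(z < N) (y <= z) * g (N - z) = \sum_(x < N - y) g x.+1.
Proof.
move=> le.
rewrite -(big_mkord xpredT (fun z => (y <= z) * g (N - z))) -(big_mkord xpredT (fun x => g x.+1)) big_nat_rev /=.
rewrite (big_cat_nat (n := N - y)) ?leq_subr //= [X in _ + X]big1_seq ?addn0; last first.
  move=> z /andP[_]; rewrite mem_index_iota => /andP[h1 h2].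
  rewrite add0n (_ : y <= N - z.+1 = false) ?mul0n //; apply/negbTE; rewrite -ltnNge; lia.
apply: eq_big_nat => z /andP[_ hz].
rewrite add0n (_ : y <= N - z.+1) ?mul1n; last by lia.
congr g; lia.
Qed.

Lemma step m L (g F : nat -> nat) : 0 < m ->
  \sum_(z < m * L) g (m * L - z) * (\sum_(y < z.+1) (m %| y) * F (y %/ m)) =
  \sum_(y < L) (\sum_(x < m * (L - y)) g x.+1) * F y.
Proof.
move=> mp.
have E1 : forall z : 'I_(m * L), \sum_(y < z.+1) (m %| y) * F (y %/ m) =
    \sum_(y < m * L) (y <= z) * ((m %| y) * F (y %/ m)).
  move=> z; rewrite -(big_mkord xpredT (fun y => (m %| y) * F (y %/ m))) -(big_mkord xpredT (fun y => (y <= z) * ((m %| y) * F (y %/ m)))) (big_cat_nat (n := z.+1) (leq0n _) (ltn_ord z)) /=.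
  rewrite [X in _ = _ + X]big1_seq ?addn0; last first.
    move=> y /andP[_]; rewrite mem_index_iota => /andP[h1 _].
    by rewrite (_ : y <= z = false) ?mul0n //; apply/negbTE; rewrite -ltnNge.
  apply: eq_big_nat => y /andP[_ hy]; by rewrite ltnS in hy; rewrite hy mul1n.
under eq_bigr => z _ do rewrite E1 big_distrr /=.
rewrite exchange_big /=.
have E2 : forall j : 'I_(m * L), \sum_(i < m * L) g (m * L - i) * ((j <= i) * ((m %| j) * F (j %/ m))) =
   (m %| j) * (F (j %/ m) * \sum_(i < m * L) (j <= i) * g (m * L - i)).
  move=> j; rewrite mulnA big_distrr /=; apply: eq_bigr => i _; ring.
under eq_bigr => j _ do rewrite E2.
rewrite (@sum_mult m L (fun y => F (y %/ m) * \sum_(i < m * L) (y <= i) * g (m * L - i))) //.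
apply: eq_bigr => y _.
have hy : m * y <= m * L by rewrite leq_mul2l (ltnW (ltn_ord y)) orbT.
by rewrite mulKn // sum_tail // -mulnBr mulnC.
Qed.


Fixpoint cnt (s : seq nat) (N : nat) : nat :=
  if s is a :: s' then \sum_(c < N.+1) (c * a <= N) * cnt s' (N - c * a) else (N == 0 : nat).

Lemma natnE (n : nat) : (n%:R)%R = n.
Proof. by elim: n => //= n IH; rewrite mulrS IH. Qed.

Lemma muln_R (a b : nat) : (a * b)%R = (a * b)%N.
Proof. by []. Qed.
Lemma addn_R (a b : nat) : (a + b)%R = (a + b)%N.
Proof. by []. Qed.

Lemma sum_delta n (k : nat) (f : nat -> nat) : \sum_(j < n) ((j : nat) == k) * f j = (k < n) * f k.
Proof.
elim: n => [|n IH]; first by rewrite big_ord0.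
rewrite big_ord_recr /= IH ltnS leq_eqVlt.
case: (ltngtP k n) => [h|h|->]; rewrite ?eqxx /=; try lia.
Qed.

Lemma sumn_extend (a : nat -> nat) n n' : n <= n' -> (forall j, n <= j -> a j = 0) ->
  \sum_(j < n) a j = \sum_(j < n') a j.
Proof.
move=> le H; rewrite -!(big_mkord xpredT) (big_cat_nat (leq0n n) le) /=.
rewrite [X in _ = _ + X]big1_seq ?addn0 // => j /andP[_]; rewrite mem_index_iota => /andP[hj _].
exact: H.
Qed.

Definition Sa (B a : nat) : {poly nat} := (\sum_(v < B.+1) 'X^(a * v))%R.

Lemma coef_Sa B a k : ((Sa B a)`_k)%R = \sum_(v < B.+1) (k == a * v).
Proof.
rewrite /Sa coef_sum; apply: eq_bigr => v _; by rewrite coefXn natnE.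
Qed.

Lemma cnt_poly B s N : N <= B -> all (fun a => 0 < a) s ->
  cnt s N = ((\prod_(a <- s) Sa B a)`_N)%R.
Proof.
elim: s N => [|a s IH] N hN /=; first by rewrite big_nil coef1 natnE.
move=> /andP[ha hs].
rewrite big_cons coefM.
under [RHS]eq_bigr => j _ do rewrite coef_Sa muln_R big_distrl /=.
rewrite exchange_big /=.
under [RHS]eq_bigr => v _ do rewrite (@sum_delta _ _ (fun j => ((\prod_(a <- s) Sa B a)`_(N - j))%R)).
rewrite (@sumn_extend (fun c => (c * a <= N) * cnt s (N - c * a)) N.+1 B.+1) //; last first.
  move=> j hj; rewrite (_ : j * a <= N = false) //; apply/negbTE; rewrite -ltnNge.
  by apply: (leq_trans hj); rewrite leq_pmulr.
apply: eq_bigr => v _; rewrite ltnS [(v * a)%N]mulnC; case: (leqP (a * v) N) => hv; rewrite ?mul1n ?mul0n //.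
by rewrite IH //; lia.
Qed.

Lemma card_cnt N (P : pred 'I_N.+1) : ~~ P ord0 ->
  #|[set c : {ffun 'I_N.+1 -> 'I_N.+1} |
      [forall k, (c k != 0 :> nat) ==> P k] && (\sum_(k < N.+1) k * c k == N)]|
  = cnt [seq val k | k <- enum P] N.
Proof.
move=> P0.
pose F := fun (k : 'I_N.+1) (v : 'I_N.+1) =>
  if (v != 0 :> nat) ==> P k then ('X^(k * v))%R else (0%R : {poly nat}).
have E1 : forall c : {ffun 'I_N.+1 -> 'I_N.+1},
    (c \in [set c : {ffun 'I_N.+1 -> 'I_N.+1} |
      [forall k, (c k != 0 :> nat) ==> P k] && (\sum_(k < N.+1) k * c k == N)] : nat)
    = ((\prod_(k < N.+1) F k (c k))`_N)%R.
  move=> c; rewrite inE.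
  case: forallP => [Hall | Hn] /=.
    rewrite (eq_bigr (fun k : 'I_N.+1 => 'X^(k * c k))%R); last by move=> k _; rewrite /F Hall.
    by rewrite prodrXr coefXn natnE eq_sym.
  have [k Hk] : exists k, ~~ ((c k != 0 :> nat) ==> P k).
    by apply/existsP; rewrite -negb_forall; apply/negP => /forallP.
  by rewrite (bigD1 k) //= /F (negbTE Hk) mul0r coef0.
rewrite -sum1_card big_mkcond /=.
rewrite (eq_bigr (fun c : {ffun 'I_N.+1 -> 'I_N.+1} => ((\prod_(k < N.+1) F k (c k))`_N)%R)); last first.
  by move=> c _; rewrite -E1; case: (_ \in _).
rewrite -[LHS]/(((\sum_(c : {ffun 'I_N.+1 -> 'I_N.+1}) ((\prod_(k < N.+1) F k (c k))`_N)))%R).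
rewrite -coef_sum -bigA_distr_bigA /=.
rewrite (eq_bigr (fun k : 'I_N.+1 => if P k then Sa N k else 1%R)); last first.
  move=> k _; case: (boolP (P k)) => Pk.
    rewrite /Sa; apply: eq_bigr => v _; by rewrite /F Pk implybT.
  rewrite big_ord_recl /F /= muln0 expr0 big1 ?addr0 // => v _.
  by rewrite /bump /= (negbTE Pk).
rewrite -big_mkcond /= -big_enum /= -(big_map val xpredT (Sa N)).
rewrite (cnt_poly (B := N)) //.
apply/allP => a /mapP [k]; rewrite mem_enum => Pk ->.
rewrite lt0n; apply/negP => /eqP k0.
have ek : ord0 = k by apply/eqP; rewrite -val_eqE /= k0.
by move: P0; rewrite ek; move: Pk; rewrite unfold_in => ->.
Qed.


Lemma cnt_perm s t N : perm_eq s t -> all (fun a => 0 < a) s -> cnt s N = cnt t N.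
Proof.
move=> pst ps.
have pt : all (fun a => 0 < a) t by rewrite -(perm_all _ pst).
by rewrite !(cnt_poly (B := N)) // (perm_big _ pst).
Qed.

Lemma cnt_filter N s N' : N' <= N -> cnt [seq a <- s | a <= N] N' = cnt s N'.
Proof.
elim: s N' => [//|a s IH] N' hN /=.
case: ifP => ha /=.
  apply: eq_bigr => c _; case: leqP => // _; rewrite IH //; lia.
rewrite big_ord_recl /= mul1n mul0n subn0 IH // big1 ?addn0 // => c _.
rewrite (_ : bump 0 c * a <= N' = false) ?mul0n //.
apply/negbTE; rewrite -ltnNge; rewrite /bump /= add1n mulSn.
move/negbT: ha; rewrite -ltnNge; lia.
Qed.

Lemma cnt_dvd d s N : all (fun a => d %| a) s -> ~~ (d %| N) -> cnt s N = 0.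
Proof.
elim: s N => [|a s IH] N /=; first by move=> _ hN; case: N hN => //; rewrite dvdn0.
move=> /andP[da ds] hN; apply: big1 => c _.
case: leqP => hc; rewrite ?mul0n // mul1n IH //.
by rewrite -(dvdn_addr _ (dvdn_mull c da)) subnKC.
Qed.

Lemma in_range_le K i j : i <= j -> in_range K j -> in_range K i.
Proof. by case: K => //= k hij hj; exact: leq_trans hij hj. Qed.

Lemma MprodS m j : Mprod m j.+1 = Mprod m j * m j.+1.
Proof. by rewrite /Mprod big_ord_recr. Qed.

Lemma Mprod0 m : Mprod m 0 = m 0.
Proof. by rewrite /Mprod big_ord1. Qed.

Lemma Mprod_dvd m i j : i <= j -> Mprod m i %| Mprod m j.
Proof.
move=> /subnK <-; elim: (j - i) => [|d IH]; first by rewrite add0n.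
by rewrite addSn MprodS dvdn_mulr.
Qed.

Section MS.
Variables (m : nat -> nat) (K : option nat).
Hypothesis hm0 : m 0 = 1.
Hypothesis hm2 : forall j, 1 <= j -> in_range K j -> 2 <= m j.

Lemma Mprod_pos j : in_range K j -> 0 < Mprod m j.
Proof.
elim: j => [|j IH] hj; first by rewrite Mprod0 hm0.
rewrite MprodS muln_gt0 IH ?(in_range_le (leqnSn j) hj) //=.
by apply: leq_trans (hm2 _ hj).
Qed.

Lemma Mprod_lt j : in_range K j.+1 -> Mprod m j < Mprod m j.+1.
Proof.
move=> hj; rewrite MprodS -{1}(muln1 (Mprod m j)) ltn_pmul2l ?Mprod_pos //.
  exact: hm2 hj.
exact: in_range_le (leqnSn j) hj.
Qed.

Lemma Mprod_mono i j : i < j -> in_range K j -> Mprod m i < Mprod m j.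
Proof.
move=> /subnK <-; elim: (j - i.+1) => [|d IH] h.
  by rewrite add0n Mprod_lt.
rewrite addSn; apply: ltn_trans (IH _) (Mprod_lt h).
exact: in_range_le (leqnSn _) h.
Qed.

Lemma Mprod_ge j : in_range K j -> j < Mprod m j.
Proof.
elim: j => [|j IH] hj; first by rewrite Mprod0 hm0.
have := Mprod_lt hj; have := IH (in_range_le (leqnSn j) hj); lia.
Qed.

Lemma Mprod_inj i j : in_range K i -> in_range K j -> Mprod m i = Mprod m j -> i = j.
Proof.
move=> hi hj e; case: (ltngtP i j) => // h.
  by have := Mprod_mono h hj; rewrite e ltnn.
by have := Mprod_mono h hi; rewrite e ltnn.
Qed.

Definition partsL S j := [seq Mprod m i | i <- [seq i <- iota j (S - j) | in_range K i]].

Lemma partsL_cons S j : j < S -> in_range K j -> partsL S j = Mprod m j :: partsL S j.+1.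
Proof.
move=> hjS hj; rewrite /partsL -(subnSK hjS) /= hj //.
Qed.

Lemma partsL_pos S j : all (fun a => 0 < a) (partsL S j).
Proof.
apply/allP => a /mapP [i]; rewrite mem_filter => /andP[hi _] ->; exact: Mprod_pos.
Qed.

Lemma partsL_dvd S j : all (fun a => Mprod m j %| a) (partsL S j).
Proof.
apply/allP => a /mapP [i]; rewrite mem_filter mem_iota => /andP[_ /andP[hji _]] ->.
exact: Mprod_dvd.
Qed.

Lemma pM_cnt N S : N < S -> pM m K N = cnt (partsL S 0) N.
Proof.
move=> hNS.
rewrite /pM card_cnt; last first.
  apply/existsP => [[r]]; rewrite /= => /andP[_]; rewrite (ord1 r) Mprod0 hm0.
  by [].
rewrite -[RHS](cnt_filter _ (N := N)) //.
apply: cnt_perm.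
  apply: uniq_perm.
  - by rewrite map_inj_uniq ?enum_uniq //; exact: val_inj.
  - rewrite filter_uniq // map_inj_in_uniq ?filter_uniq ?iota_uniq //.
    move=> i j; rewrite !mem_filter => /andP[hi _] /andP[hj _]; exact: Mprod_inj.
  - move=> a; rewrite mem_filter; apply/idP/idP.
    + move=> /mapP [k]; rewrite mem_enum => Pk ->.
      rewrite -ltnS ltn_ord /=.
      move: Pk; rewrite unfold_in => /existsP [r /andP[hr /eqP e]].
      apply/mapP; exists (nat_of_ord r) => //; rewrite mem_filter hr mem_iota /= add0n subn0.
      have := ltn_ord r; have := ltn_ord k; lia.
    + move=> /andP[haN /mapP [i]]; rewrite mem_filter => /andP [hi _] ea; rewrite ea in haN *.
      apply/mapP; exists (@Ordinal N.+1 (Mprod m i) haN) => //.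
      rewrite mem_enum unfold_in; apply/existsP.
      exists (@Ordinal (Mprod m i).+1 i (ltnW (Mprod_ge hi))) => /=.
      by rewrite hi eqxx.
apply/allP => a /mapP [k]; rewrite mem_enum unfold_in => /existsP [r /andP[hr /eqP e]] ->.
by rewrite /= -e Mprod_pos.
Qed.

Lemma C_rec S j z : j.+1 < S -> in_range K j.+1 ->
  cnt (partsL S j) (Mprod m j * z) =
  \sum_(y < z.+1) (m j.+1 %| y) * cnt (partsL S j.+1) (Mprod m j.+1 * (y %/ m j.+1)).
Proof.
move=> hS hj1.
have hj : in_range K j by apply: in_range_le hj1.
have Mp := Mprod_pos hj.
rewrite partsL_cons //=; last by apply: ltnW.
set C' := cnt (partsL S j.+1).
rewrite -(@sumn_extend (fun c => (c * Mprod m j <= Mprod m j * z) * C' (Mprod m j * z - c * Mprod m j)) z.+1); last first.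
- move=> c hc; rewrite (_ : c * Mprod m j <= Mprod m j * z = false) //.
  by apply/negbTE; rewrite -ltnNge [Mprod m j * z]mulnC ltn_pmul2r.
- by rewrite ltnS leq_pmull.
rewrite (reindex_inj rev_ord_inj) /=.
apply: eq_bigr => y _.
rewrite subSS (_ : (z - y) * Mprod m j <= Mprod m j * z); last first.
  by rewrite mulnC leq_pmul2l // leq_subr.
rewrite mul1n [(z - y) * _]mulnC -mulnBr subKn; last by rewrite -ltnS.
have m1 : 0 < m j.+1 by apply: leq_trans (hm2 _ hj1).
case: (boolP (m j.+1 %| y)) => hy.
  by rewrite mul1n MprodS -mulnA [m j.+1 * _]mulnC divnK.
rewrite mul0n /C'; apply: (cnt_dvd (d := Mprod m j.+1)); first exact: partsL_dvd.
by rewrite MprodS dvdn_pmul2l.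
Qed.

End MS.


Lemma cop_lemma a b t : 0 < b -> (forall p, prime p -> p %| a -> t <= p) ->
  (forall p, prime p -> p %| b -> p < t) -> coprime a b.
Proof.
move=> bp Ha Hb; rewrite /coprime; apply/negP => /negP hg.
have g1 : 1 < gcdn a b.
  have : 0 < gcdn a b by rewrite gcdn_gt0 bp orbT.
  by move: hg; case: (gcdn a b) => [|[|]].
have pp := pdiv_prime g1.
have pa : pdiv (gcdn a b) %| a := dvdn_trans (pdiv_dvd _) (dvdn_gcdl a b).
have pb : pdiv (gcdn a b) %| b := dvdn_trans (pdiv_dvd _) (dvdn_gcdr a b).
by have := Ha _ pp pa; have := Hb _ pp pb; lia.
Qed.

Theorem corollary1p4 (m : nat -> nat) (K : option nat)
  (hm0 : m 0 = 1)
  (hm2 : forall j, 1 <= j -> in_range K j -> 2 <= m j)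
  (hprime : forall t p, 1 <= t -> in_range K t -> prime p -> p %| m t -> t <= p)
  (n r : nat) (hn : 0 < n) (hr : 0 < r) (hrK : in_range K r) :
  pM m K ((\prod_(1 <= i < r.+1) m i) * n - 1) = 0 %[mod \prod_(2 <= i < r.+1) m i].
Proof.
have hP1 : \prod_(1 <= i < r.+1) m i = Mprod m r.
  by rewrite /Mprod -(big_mkord xpredT) [in RHS]big_ltn // hm0 mul1n.
rewrite hP1.
set S := Mprod m r * n + r.+1.
pose L t := \prod_(t.+1 <= i < r.+1) m i * n.
pose Q t z := cnt (partsL m K S t) (Mprod m t * z).
have N0p : 0 < Mprod m r * n by rewrite muln_gt0 hn (Mprod_pos hm0 hm2 hrK).
have Inv : forall t, t <= r ->
    pM m K (Mprod m r * n - 1) = \sum_(z < L t) gg m t (L t - z) * Q t z.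
  elim=> [_|t IH ht].
    rewrite /L hP1.
    rewrite (eq_bigr (fun z : 'I_(Mprod m r * n) => (z == (Mprod m r * n).-1 :> nat) * Q 0 z)); last first.
      move=> z _ /=; congr (_ * _); have := ltn_ord z.
      by case: eqP => e; case: eqP => e'; lia.
    rewrite sum_delta (prednK N0p) leqnn mul1n /Q Mprod0 hm0 mul1n.
    rewrite (@pM_cnt m K hm0 hm2 _ S) ?subn1 // /S; lia.
  have hin : in_range K t.+1 by apply: in_range_le hrK.
  have hS : t.+1 < S by rewrite /S; lia.
  have mp : 0 < m t.+1 by have := hm2 _ (ltn0Sn t) hin; lia.
  rewrite (IH (ltnW ht)).
  have EL : L t = m t.+1 * L t.+1 by rewrite /L big_ltn // mulnA.
  rewrite EL.
  under eq_bigr => z _ do rewrite /Q (@C_rec m K hm0 hm2 S t z hS hin).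
  rewrite (@step (m t.+1) (L t.+1) (gg m t) (fun y => cnt (partsL m K S t.+1) (Mprod m t.+1 * y))) //.
have Hr := Inv r (leqnn r).
have Lr : L r = n by rewrite /L big_geq // mul1n.
rewrite Lr in Hr.
suff H : \prod_(2 <= i < r.+1) m i %| pM m K (Mprod m r * n - 1).
  by apply/eqP; rewrite mod0n; exact: H.
rewrite Hr; apply: dvdn_sum => z _; apply: dvdn_mulr.
case: (ltngtP r 1) => [hr1|hr2|e1]; [by lia | | by rewrite e1 big_geq].
have mpos : forall s, 0 < s <= r -> 0 < m s.
  move=> s /andP[s0 sr]; have := hm2 _ s0 (in_range_le sr hrK); lia.
have cop : forall s j, 0 < s <= r -> 0 < j -> j.+1 < s -> coprime (m s) (j * j.+1).
  move=> s j /andP[s0 sr] j0 js.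
  apply: (@cop_lemma _ _ s); first by rewrite muln_gt0 j0.
    by move=> p pp pd; apply: hprime pd => //; apply: in_range_le hrK.
  move=> p pp; rewrite Euclid_dvdM // => /orP[] /dvdn_leq; [move=> /(_ j0) | move=> /(_ isT)]; lia.
have [h [_ _ gh]] := gg_div mpos cop (t := r) (introT andP (conj hr2 (leqnn r))).
have := dvdzz (Posz (Pprod m r)).
move/(dvdz_mull (h (n - z))); rewrite mulrC -gh dvdzE !absz_nat.
by [].
Qed.
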